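(* Let $W$ and $H$ be arbitrary finite simple graphs, $U\subseteq V(W)$, and $G=W(U)\sqcap H$. Then \[Z(G)\le\min\bigl\{\,Z(W)\,|V(H)|,\ \ Z(H)\,|U|+(|V(W)|-|U|)\,|V(H)|\,\bigr\}.\]
   Context: All graphs are finite, simple and undirected. Zero forcing: given a graph $G$ and a set $S\subseteq V(G)$ of initially filled vertices, the color change rule says that if a filled vertex $v$ has exactly one unfilled neighbor $u$, then $v$ forces $u$ to become filled. $S$ is a zero forcing set if repeatedly applying this rule eventually fills every vertex of $G$. The zero forcing number $Z(G)$ is the minimum cardinality of a zero forcing set of $G$. Generalized hierarchical product: for graphs $W,H$ and $U\subseteq V(W)$ (the root set), $W(U)\sqcap H$ is the graph with vertex set $V(W)\times V(H)$ in which $(x_1,y_1)$ and $(x_2,y_2)$ are adjacent iff either ($x_1=x_2\in U$ and $y_1y_2\in E(H)$) or ($y_1=y_2$ and $x_1x_2\in E(W)$). *)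

(* Defs.v *)
From mathcomp Require Import all_boot.
Set Implicit Arguments. Unset Strict Implicit. Unset Printing Implicit Defensive.

Definition simple_graph (T : finType) (e : rel T) : Prop :=
  symmetric e /\ irreflexive e.

Definition force_step (T : finType) (e : rel T) (S : {set T}) : {set T} :=
  S :|: [set u | [exists v, [&& v \in S, u \notin S, e v u &
          [forall w, (e v w && (w \notin S)) ==> (w == u)]]]].

(* Closure under the colour change rule (#|T| rounds suffice). *)
Definition force_closure (T : finType) (e : rel T) (S : {set T}) : {set T} :=
  iter #|T| (force_step e) S.

Definition zero_forcing_set (T : finType) (e : rel T) (S : {set T}) : bool :=
  force_closure e S == [set: T].

(* Zero forcing number: minimum cardinality of a zero forcing set
   ([set: T] is always one, so #|T| is a valid default). *)
Definition Z (T : finType) (e : rel T) : nat :=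
  \big[minn/#|T|]_(S : {set T} | zero_forcing_set e S) #|S|.

Definition hier_prod (TW TH : finType) (eW : rel TW) (U : {set TW})
  (eH : rel TH) : rel (TW * TH) :=
  fun p q => ((p.1 == q.1) && (p.1 \in U) && eH p.2 q.2)
          || ((p.2 == q.2) && eW p.1 q.1).

(* Main.v *)
Require Import Defs.
From mathcomp Require Import all_boot.
Set Implicit Arguments. Unset Strict Implicit. Unset Printing Implicit Defensive.

Section ZF.
Variables (T : finType) (e : rel T).

Definition closedP (X : {set T}) : Prop :=
  forall v u, v \in X -> u \notin X -> e v u ->
    (forall w, e v w -> w \notin X -> w = u) -> False.

Lemma step_sub (Y X : {set T}) : Y \subset X -> closedP X -> force_step e Y \subset X.
Proof.
move=> sYX cl; apply/subsetP => u; rewrite in_setU => /orP[/(subsetP sYX)//|].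
rewrite inE => /existsP[v /and4P[vY uY evu /forallP H]].
case uX: (u \in X) => //; exfalso.
apply: (cl v u) => //; first by apply: (subsetP sYX).
  by rewrite uX.
move=> w evw wX; apply/eqP; have := H w; rewrite evw /=.
have -> : w \notin Y by apply: contra wX; apply: (subsetP sYX).
by [].
Qed.

Lemma closure_sub (S X : {set T}) : S \subset X -> closedP X -> force_closure e S \subset X.
Proof.
move=> sSX cl; rewrite /force_closure; elim: #|T| => [|n IH] //=.
exact: step_sub.
Qed.

Lemma step_ext (Y : {set T}) : Y \subset force_step e Y.
Proof. exact: subsetUl. Qed.

Lemma iter_fix (S : {set T}) k : iter k.+1 (force_step e) S = iter k (force_step e) S ->
  forall m, iter (m + k) (force_step e) S = iter k (force_step e) S.
Proof.
move=> Hk; elim=> [|m IH] //=.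
by rewrite -/(iter (m + k).+1 (force_step e) S) /= IH -/(iter k.+1 _ _) Hk.
Qed.

Lemma iter_grow (S : {set T}) n : (forall k, k < n -> iter k.+1 (force_step e) S != iter k (force_step e) S) ->
  n <= #|iter n (force_step e) S|.
Proof.
elim: n => [|n IH] H //.
have h1 : n <= #|iter n (force_step e) S| by apply: IH => k kn; apply: H; exact: ltnW.
apply: (leq_ltn_trans h1); apply: proper_card.
rewrite properEneq step_ext andbT eq_sym.
exact: (H n (ltnSn n)).
Qed.

Lemma closure_fixed (S : {set T}) : force_step e (force_closure e S) = force_closure e S.
Proof.
case: (boolP [exists k : 'I_(#|T|).+1,
   iter k.+1 (force_step e) S == iter k (force_step e) S]).
  move=> /existsP[k /eqP Hk].
  have kle : k <= #|T| by rewrite -ltnS.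
  rewrite /force_closure -(subnK kle) (iter_fix Hk).
  exact: Hk.
rewrite negb_exists => /forallP H.
have := @iter_grow S (#|T|.+1) (fun k kl => H (Ordinal kl)).
by rewrite ltnNge max_card.
Qed.

Lemma closure_closed (S : {set T}) : closedP (force_closure e S).
Proof.
move=> v u vC uC evu uniq.
have : u \in force_step e (force_closure e S).
  rewrite in_setU; apply/orP; right; rewrite inE; apply/existsP; exists v.
  rewrite vC uC evu /=; apply/forallP => w; apply/implyP => /andP[evw wC].
  by rewrite (uniq w evw wC).
by rewrite closure_fixed (negbTE uC).
Qed.

Lemma zf_char (S : {set T}) : (forall X : {set T}, S \subset X -> closedP X -> X = setT) ->
  zero_forcing_set e S.
Proof.
move=> H; rewrite /zero_forcing_set; apply/eqP; apply: H.
  rewrite /force_closure; elim: #|T| => [|n IH] //=.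
  exact: subset_trans IH (step_ext _).
exact: closure_closed.
Qed.

Lemma zf_use (S Y : {set T}) : zero_forcing_set e S -> S \subset Y -> closedP Y -> Y = setT.
Proof.
move=> /eqP zf sSY cl; apply/eqP; rewrite eqEsubset subsetT /=.
by rewrite -zf; apply: closure_sub.
Qed.

Lemma bigmin_le (I : eqType) (r : seq I) (P : pred I) (F : I -> nat) d x :
  x \in r -> P x -> \big[minn/d]_(i <- r | P i) F i <= F x.
Proof.
elim: r => [//|y r IH]; rewrite inE big_cons => /orP[/eqP->|xr] Px.
  by rewrite Px geq_minl.
case: (P y); last exact: IH.
exact: leq_trans (geq_minr _ _) (IH xr Px).
Qed.

Lemma Z_le (S : {set T}) : zero_forcing_set e S -> Z e <= #|S|.
Proof. by move=> zf; rewrite /Z; apply: bigmin_le => //; rewrite mem_index_enum. Qed.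

Lemma Z_attained : exists S, zero_forcing_set e S /\ #|S| = Z e.
Proof.
rewrite /Z; apply: (big_ind (fun x => exists S, zero_forcing_set e S /\ #|S| = x)).
- exists setT; split; last exact: cardsT.
  apply: zf_char => X sX _; apply/eqP; by rewrite eqEsubset sX subsetT.
- move=> x y [S1 [z1 e1]] [S2 [z2 e2]]; rewrite /minn; case: ifP => _.
    by exists S1. by exists S2.
- by move=> S zf; exists S.
Qed.

End ZF.

Theorem mainTheorem11 (TW TH : finType) (eW : rel TW) (eH : rel TH)
  (U : {set TW}) :
  simple_graph eW -> simple_graph eH ->
  Z (hier_prod eW U eH) <=
    minn (Z eW * #|TH|) (Z eH * #|U| + (#|TW| - #|U|) * #|TH|).
Proof.
move=> _ _; rewrite leq_min; apply/andP; split.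
  have [SW [zfW cW]] := Z_attained eW.
  set S1 := setX SW [set: TH].
  have -> : Z eW * #|TH| = #|S1| by rewrite cardsX cardsT cW.
  apply: Z_le; apply: zf_char => X sub cl.
  pose Y := [set w | [forall h, (w, h) \in X]].
  have sY : SW \subset Y.
    apply/subsetP => w wS; rewrite inE; apply/forallP => h.
    by apply: (subsetP sub); rewrite in_setX wS in_setT.
  have clY : closedP eW Y.
    move=> v u vY uY evu uniq.
    move: uY; rewrite inE negb_forall => /existsP[h uhX].
    move: vY; rewrite inE => /forallP vY.
    apply: (cl (v, h) (u, h)) => //.
      by rewrite /hier_prod /= eqxx evu orbT.
    move=> [q1 q2]; rewrite /hier_prod /=.
    case/orP => [/andP[/andP[/eqP e1 _] _]|/andP[/eqP e2 eW1]] qX.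
      by rewrite -e1 vY in qX.
    subst q2; congr pair; apply: uniq => //.
    by rewrite inE negb_forall; apply/existsP; exists h.
  have YT := zf_use zfW sY clY.
  apply/setP => [[w h]]; rewrite in_setT.
  have : w \in Y by rewrite YT in_setT.
  by rewrite inE => /forallP /(_ h) ->.
have [SH [zfH cH]] := Z_attained eH.
set S2 := setX (~: U) [set: TH] :|: setX U SH.
have -> : Z eH * #|U| + (#|TW| - #|U|) * #|TH| = #|S2|.
  have dis : setX (~: U) [set: TH] :&: setX U SH = set0.
    apply/setP => [[w h]]; rewrite !inE /=.
    by case: (w \in U); rewrite ?andbF.
  have := cardsUI (setX (~: U) [set: TH]) (setX U SH).
  rewrite dis cards0 addn0 !cardsX cardsT => ->.
  have -> : #|~: U| = #|TW| - #|U| by rewrite -(cardsC U) addKn.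
  by rewrite -cH addnC [#|U| * _]mulnC.
apply: Z_le; apply: zf_char => X sub cl.
pose Y := [set h | [forall w, (w \in U) ==> ((w, h) \in X)]].
have sY : SH \subset Y.
  apply/subsetP => h hS; rewrite inE; apply/forallP => w; apply/implyP => wU.
  by apply: (subsetP sub); rewrite in_setU; apply/orP; right; rewrite in_setX wU hS.
have clY : closedP eH Y.
  move=> v u vY uY evu uniq.
  move: uY; rewrite inE negb_forall => /existsP[w]; rewrite negb_imply => /andP[wU wuX].
  move: vY; rewrite inE => /forallP vY.
  apply: (cl (w, v) (w, u)) => //.
      by have := vY w; rewrite wU.
    by rewrite /hier_prod /= eqxx wU evu.
  move=> [q1 q2]; rewrite /hier_prod /=.
  case/orP => [/andP[/andP[/eqP e1 _] eH1]|/andP[/eqP e2 eW1]] qX.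
    subst q1; congr pair; apply: uniq => //.
    rewrite inE negb_forall; apply/existsP; exists w; by rewrite wU.
  subst q2; exfalso; case q1U: (q1 \in U).
    by have := vY q1; rewrite q1U (negbTE qX).
  move: qX; apply/negP; rewrite negbK; apply: (subsetP sub).
  by rewrite in_setU in_setX !inE q1U.
have YT := zf_use zfH sY clY.
apply/setP => [[w h]]; rewrite in_setT.
case wU: (w \in U).
  have : h \in Y by rewrite YT in_setT.
  by rewrite inE => /forallP /(_ w); rewrite wU /= => ->.
by apply: (subsetP sub); rewrite in_setU in_setX !inE wU.
Qed.
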